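(* Let $n\ge 3$ and $d\ge 2$. For every biseparable state $\rho$ on $(\mathbb{C}^d)^{\otimes n}$, $$\mathcal{C}_{n-1}(\rho)\le \max[A,B],$$ where $A=d^n-2d^{n/2}+1$ and $B=(d-1)(d^{n-1}-1)+d^{n-1}-1-\frac{n}{n-1}(d^{n-3}-1)$.
   Context: Consider $n$ qudits with Hilbert space $(\mathbb{C}^d)^{\otimes n}$. Let $\lambda_0=\mathbb{1}_d$ and let $\lambda_1,\dots,\lambda_{d^2-1}$ be Hermitian traceless $d\times d$ matrices normalized so that $\mathrm{Tr}[\lambda_i\lambda_j]=d\,\delta_{ij}$. For a nonempty subset $\alpha\subseteq\{1,\dots,n\}$ and a state $\rho$ with reduced state $\rho_\alpha$, define $\|\tau_\alpha(\rho)\|^2=\sum_{(i_k)_{k\in\alpha}\in\{1,\dots,d^2-1\}^{\alpha}}\big(\mathrm{Tr}[\rho_\alpha\bigotimes_{k\in\alpha}\lambda_{i_k}]\big)^2$, and $\mathcal{C}_{n-1}(\rho)=\sum_{|\alpha|\ge n-1}\|\tau_\alpha(\rho)\|^2$. A state is biseparable if it is a convex combination of pure states each of which is a product $|\phi\rangle_\beta\otimes|\chi\rangle_{\overline{\beta}}$ for some bipartition $\{1,\dots,n\}=\beta\,\dot\cup\,\overline\beta$ into nonempty sets (the bipartition may differ between terms). *)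

(* Defs.v *)
From HB Require Import structures.
From mathcomp Require Import all_boot all_order all_algebra.
From mathcomp Require Import reals.
From mathcomp Require Export complex.

Set Implicit Arguments.
Unset Strict Implicit.
Unset Printing Implicit Defensive.

Import Order.TTheory GRing.Theory Num.Theory.
Local Open Scope ring_scope.

Section QuditDefs.
Variable R : realType.
Local Notation C := R[i].
Variables n d : nat.

(* Computational basis of (C^d)^{\otimes n}: basis vectors |x_1 ... x_n>
   are labelled by configurations x : 'I_n -> 'I_d. *)
Definition config := {ffun 'I_n -> 'I_d}.

Definition vec := config -> C.
Definition op := config -> config -> C.

Definition cconj (z : C) : C := Num.conj z.

Definition normalized (psi : vec) : Prop :=
  \sum_(x : config) psi x * cconj (psi x) = 1.

(* phi only depends on the tensor factors in beta, i.e. phi is (the coordinate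
   function of) a vector of (C^d)^{\otimes beta} *)
Definition depends_only_on (beta : {set 'I_n}) (phi : vec) : Prop :=
  forall x y : config, (forall k, k \in beta -> x k = y k) -> phi x = phi y.

(* psi = |phi>_beta (x) |chi>_{complement of beta} *)
Definition product_across (beta : {set 'I_n}) (psi : vec) : Prop :=
  exists phi chi : vec,
    [/\ depends_only_on beta phi, depends_only_on (~: beta) chi &
        forall x, psi x = phi x * chi x].

Definition biproduct (psi : vec) : Prop :=
  exists beta : {set 'I_n},
    [/\ beta != set0, beta != [set: 'I_n] & product_across beta psi].

Definition biseparable (rho : op) : Prop :=
  exists (m : nat) (p : 'I_m -> R) (psi : 'I_m -> vec),
    [/\ forall k, 0 <= p k,
        \sum_(k < m) p k = 1,
        forall k, normalized (psi k) /\ biproduct (psi k) &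
        forall x y, rho x y = \sum_(k < m) real_complex R (p k) * psi k x * cconj (psi k y)].

Definition gm_basis (lam : 'I_(d ^ 2 - 1) -> 'M[C]_d) : Prop :=
  [/\ forall i a b, lam i a b = cconj (lam i b a),
      forall i, \tr (lam i) = 0 &
      forall i j, \tr (lam i *m lam j) = (d * (i == j))%:R].

Variable lam : 'I_(d ^ 2 - 1) -> 'M[C]_d.

(* local operator: None stands for lam_0 = identity, Some i for lam_i *)
Definition loc_op (o : option 'I_(d ^ 2 - 1)) : 'M[C]_d :=
  if o is Some i then lam i else 1%:M.

Definition tens_op (mu : {ffun 'I_n -> option 'I_(d ^ 2 - 1)}) : op :=
  fun x y => \prod_(k < n) loc_op (mu k) (x k) (y k).

Definition supp (mu : {ffun 'I_n -> option 'I_(d ^ 2 - 1)}) : {set 'I_n} :=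
  [set k | mu k != None].

(* Tr[rho_alpha (x)_{k in alpha} lam_{i_k}] = Tr[rho ((x)_{k in alpha} lam_{i_k} (x) 1)]
   where alpha = supp mu (real part taken; the trace is real for Hermitian rho) *)
Definition corr (rho : op) (mu : {ffun 'I_n -> option 'I_(d ^ 2 - 1)}) : R :=
  complex.Re (\sum_(x : config) \sum_(y : config) rho x y * tens_op mu y x).

(* ||tau_alpha(rho)||^2 : sum over all (i_k)_{k in alpha} in {1..d^2-1}^alpha *)
Definition tau_norm2 (alpha : {set 'I_n}) (rho : op) : R :=
  \sum_(mu : {ffun 'I_n -> option 'I_(d ^ 2 - 1)} | supp mu == alpha)
     (corr rho mu) ^+ 2.

Definition C_nm1 (rho : op) : R :=
  \sum_(alpha : {set 'I_n} | (n.-1 <= #|alpha|)%N) tau_norm2 alpha rho.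

End QuditDefs.

(* Main.v *)
Require Import Defs.
From HB Require Import structures.
From mathcomp Require Import all_boot all_order all_algebra.
From mathcomp Require Import reals.
From mathcomp Require Import complex.
From mathcomp Require Import ring lra zify.

Import Order.TTheory GRing.Theory Num.Theory.
Local Open Scope ring_scope.
Local Open Scope ring_scope.
Set Implicit Arguments.
Unset Strict Implicit.
Unset Printing Implicit Defensive.

Section Completeness.
Variable R : realType.
Variable d : nat.
Hypothesis hd : (0 < d)%N.
Variable lam : 'I_(d ^ 2 - 1) -> 'M[R[i]]_d.
Hypothesis hlam : gm_basis lam.

Local Notation L := (loc_op lam).
Local Notation I := (option 'I_(d ^ 2 - 1)).
Local Notation J := (('I_d * 'I_d)%type).

Lemma L_herm o a b : (L o a b)^* = L o b a.
Proof.
case: hlam => hh _ _; case: o => [i|] /=.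
  by rewrite hh /cconj conjCK.
by rewrite !mxE eq_sym; case: (b == a) => /=; rewrite ?conjC1 ?conjC0.
Qed.

Lemma L_orth o o' : \sum_(a : 'I_d) \sum_(b : 'I_d) L o a b * L o' b a
   = ((d * (o == o'))%N)%:R.
Proof.
have -> : \sum_(a : 'I_d) \sum_(b : 'I_d) L o a b * L o' b a = \tr (L o *m L o').
  by rewrite /mxtrace; apply: eq_bigr => a _; rewrite mxE.
case: hlam => _ htr hor.
case: o => [i|]; case: o' => [j|] /=.
- by rewrite hor.
- by rewrite mulmx1 htr muln0.
- by rewrite mul1mx htr muln0.
- by rewrite mulmx1 mxtrace1 muln1.
Qed.

Lemma cardIJ : #|{: J}| = #|{: I}|.
Proof.
rewrite card_prod card_option !card_ord mulnn subn1 prednK //.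
by rewrite expn_gt0 hd.
Qed.

Definition eJ (j : 'I_#|{: I}|) : J := enum_val (cast_ord (esym cardIJ) j).
Definition eI (i : 'I_#|{: I}|) : I := enum_val i.

Lemma eJ_bij : bijective eJ.
Proof.
exists (fun p => cast_ord cardIJ (enum_rank p)).
  by move=> j; rewrite /eJ enum_valK cast_ordKV.
by move=> p; rewrite /eJ cast_ordK enum_rankK.
Qed.

Lemma eI_bij : bijective eI.
Proof. by exists enum_rank => [i|o]; rewrite /eI ?enum_valK ?enum_rankK. Qed.

Lemma sum_eJ (F : J -> R[i]) : \sum_(p : J) F p = \sum_(j < #|{: I}|) F (eJ j).
Proof. by rewrite (reindex eJ) //; apply: onW_bij; apply: eJ_bij. Qed.

Lemma sum_eI (F : I -> R[i]) : \sum_(o : I) F o = \sum_(j < #|{: I}|) F (eI j).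
Proof. by rewrite (reindex eI) //; apply: onW_bij; apply: eI_bij. Qed.

Definition Mx : 'M[R[i]]_#|{: I}| := \matrix_(i, j) L (eI i) (eJ j).1 (eJ j).2.
Definition Mh : 'M[R[i]]_#|{: I}| := \matrix_(i, j) (Mx j i)^*.

Lemma MMh : Mx *m Mh = (d%:R)%:M.
Proof.
apply/matrixP => i i'; rewrite !mxE.
have -> : \sum_j Mx i j * Mh j i' = \sum_(p : J) L (eI i) p.1 p.2 * L (eI i') p.2 p.1.
  rewrite sum_eJ; apply: eq_bigr => j _; rewrite !mxE L_herm //.
rewrite -(pair_big xpredT xpredT (fun a b => L (eI i) a b * L (eI i') b a)) /=.
rewrite L_orth.
have injI : injective eI by apply: bij_inj; apply: eI_bij.
rewrite (inj_eq injI); case: (i == i') => /=; by rewrite ?muln1 ?muln0 ?mulr1n ?mulr0n.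
Qed.

Lemma dC_neq0 : (d%:R : R[i]) != 0.
Proof. by rewrite pnatr_eq0 -lt0n. Qed.

Lemma MhM : Mh *m Mx = (d%:R)%:M.
Proof.
have h1 : Mx *m ((d%:R)^-1 *: Mh) = 1%:M.
  by rewrite -scalemxAr MMh -scalemx1 scalerA mulVf ?dC_neq0 // scale1r.
have := mulmx1C h1; rewrite -scalemxAl => h2.
have := congr1 (fun A => (d%:R : R[i]) *: A) h2.
by rewrite scalerA mulfV ?dC_neq0 // scale1r scalemx1.
Qed.

Lemma completeness (a b a' b' : 'I_d) :
  \sum_(o : I) L o b a * L o a' b' = ((d * ((a == a') && (b == b')))%N)%:R.
Proof.
case: eJ_bij => g gK Kg.
have := congr1 (fun A : 'M[R[i]]_#|{: I}| => A (g (a, b)) (g (a', b'))) MhM; rewrite /= !mxE.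
have -> : \sum_j Mh (g (a, b)) j * Mx j (g (a', b')) = \sum_(o : I) L o b a * L o a' b'.
  rewrite sum_eI; apply: eq_bigr => j _; rewrite !mxE !Kg /= L_herm //.
move=> ->.
have injg : injective g by apply: (can_inj Kg).
rewrite (inj_eq injg) xpair_eqE.
by case: (_ && _) => /=; rewrite ?muln1 ?muln0 ?mulr1n ?mulr0n.
Qed.

End Completeness.
Local Open Scope ring_scope.
Set Implicit Arguments.
Unset Strict Implicit.
Unset Printing Implicit Defensive.

Section Main.
Variable R : realType.
Variables n d : nat.
Hypothesis hd : (0 < d)%N.
Variable lam : 'I_(d ^ 2 - 1) -> 'M[R[i]]_d.
Hypothesis hlam : gm_basis lam.
Local Notation L := (loc_op lam).
Local Notation cfg := (config n d).
Local Notation mus := {ffun 'I_n -> option 'I_(d ^ 2 - 1)}.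

Definition mix (S : {set 'I_n}) (u v : cfg) : cfg :=
  [ffun k => if k \in S then u k else v k].

Definition zz (psi : vec R n d) (mu : mus) : R[i] :=
  \sum_(x : cfg) \sum_(y : cfg) psi x * (psi y)^* * tens_op lam mu y x.

Definition Pur (psi : vec R n d) (S : {set 'I_n}) : R[i] :=
  \sum_(x : cfg) \sum_(y : cfg) psi x * psi y * (psi (mix S y x))^* * (psi (mix S x y))^*.

Lemma T_herm (mu : mus) (x y : cfg) : (tens_op lam mu x y)^* = tens_op lam mu y x.
Proof.
rewrite /tens_op rmorph_prod; apply: eq_bigr => k _; exact: L_herm.
Qed.

Lemma zz_conj psi mu : (zz psi mu)^* = zz psi mu.
Proof.
rewrite /zz rmorph_sum exchange_big; apply: eq_bigr => x _.
rewrite rmorph_sum; apply: eq_bigr => y _.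
rewrite !rmorphM /=. by rewrite T_herm conjCK [psi y * _]mulrC.
Qed.

Lemma real_sqr (z : R[i]) : z^* = z -> (((complex.Re z) ^+ 2)%:C)%C = z * z^*.
Proof.
case: z => a b /= h.
have hb : b = 0.
  have hb' := congr1 (@complex.Im R) h; simpl in hb'.
  have : b *+ 2 = 0 by rewrite mulr2n -{1}hb' addNr.
  by move/eqP; rewrite mulrn_eq0 /= => /eqP.
subst b. rewrite h. apply/eqP; rewrite eq_complex /=; apply/andP; split; apply/eqP.
  by rewrite expr2 !mulr0 subr0.
by rewrite !mulr0 mul0r addr0.
Qed.

Lemma prod_bool (b : 'I_n -> bool) :
  \prod_(k < n) ((b k)%:R : R[i]) = ([forall k, b k])%:R.
Proof.
case: (boolP [forall k, b k]) => [/forallP h|/forallP h].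
  by rewrite big1 // => k _; rewrite h.
have [k hk] : exists k, ~~ b k.
  by apply/existsP; rewrite -negb_forall; apply/negP => /forallP.
by rewrite (bigD1 k) //= (negbTE hk) mul0r.
Qed.

Lemma distr_supp (S : {set 'I_n}) (g : 'I_n -> option 'I_(d ^ 2 - 1) -> R[i]) :
  \sum_(mu : mus | supp mu \subset S) \prod_(k < n) g k (mu k)
  = \prod_(k < n) (if k \in S then \sum_o g k o else g k None).
Proof.
pose h k o := if (k \in S) || (o == None) then g k o else 0.
have -> : \prod_(k < n) (if k \in S then \sum_o g k o else g k None)
        = \prod_(k < n) \sum_o h k o.
  apply: eq_bigr => k _; rewrite /h; case: (k \in S) => //=.
  rewrite -big_mkcond /=; by rewrite (big_pred1_eq _ None).
rewrite bigA_distr_bigA /= big_mkcond /=; apply: eq_bigr => mu _.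
case: (boolP (supp mu \subset S)) => hs.
  apply: eq_bigr => k _; rewrite /h.
  case: (boolP (mu k == None)); rewrite ?orbT //= orbF => hk.
  by have := subsetP hs k; rewrite /supp inE hk => ->.
have [k hk] : exists k, (k \notin S) && (mu k != None).
  move/subsetPn: hs => [k]; rewrite /supp inE => h1 h2; exists k; by rewrite h1 h2.
case/andP: hk => hk1 hk2.
by rewrite (bigD1 k) //= /h (negbTE hk1) (negbTE hk2) mul0r.
Qed.

End Main.
Section Main2.
Variable R : realType.
Variables n d : nat.
Hypothesis hd : (0 < d)%N.
Variable lam : 'I_(d ^ 2 - 1) -> 'M[R[i]]_d.
Hypothesis hlam : gm_basis lam.
Local Notation L := (loc_op lam).
Local Notation cfg := (config n d).
Local Notation mus := {ffun 'I_n -> option 'I_(d ^ 2 - 1)}.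

Lemma sumT (S : {set 'I_n}) (x y x' y' : cfg) :
  \sum_(mu : mus | supp mu \subset S) tens_op lam mu y x * tens_op lam mu x' y'
  = (d ^ #|S|)%:R * ((y == mix S y' x) && (x' == mix S x y'))%:R.
Proof.
rewrite /tens_op.
under eq_bigr do rewrite -big_split /=.
rewrite (distr_supp S (fun k o => L o (y k) (x k) * L o (x' k) (y' k))).
pose c k := if k \in S then (x k == x' k) && (y k == y' k)
            else (y k == x k) && (x' k == y' k).
transitivity (\prod_(k < n) (((if k \in S then d else 1%N)%:R : R[i]) * (c k)%:R)).
  apply: eq_bigr => k _; rewrite /c; case: (k \in S).
    rewrite /= (completeness hd hlam). exact: natrM.
  by rewrite /= !mxE mul1r -mulnb natrM.
rewrite big_split /= prod_bool.
congr (_ * _).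
  rewrite natrX -prodr_const [RHS]big_mkcond /=; apply: eq_bigr => k _; by case: (k \in S).
suff -> : [forall k, c k] = ((y == mix S y' x) && (x' == mix S x y')) by [].
apply/forallP/andP.
  move=> h; split; apply/eqP/ffunP => k; rewrite ffunE; have := h k; rewrite /c;
    case: (k \in S) => /andP [/eqP h1 /eqP h2] //.
move=> [/eqP hy /eqP hx] k; rewrite /c hy hx !ffunE; case: (k \in S); by rewrite !eqxx.
Qed.
End Main2.
Section Main3.
Variable R : realType.
Variables n d : nat.
Hypothesis hd : (0 < d)%N.
Variable lam : 'I_(d ^ 2 - 1) -> 'M[R[i]]_d.
Hypothesis hlam : gm_basis lam.
Local Notation L := (loc_op lam).
Local Notation cfg := (config n d).
Local Notation mus := {ffun 'I_n -> option 'I_(d ^ 2 - 1)}.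

Lemma sum_ind (F : cfg -> R[i]) t : \sum_(y : cfg) F y * (y == t)%:R = F t.
Proof.
rewrite (bigD1 t) //= eqxx mulr1 big1 ?addr0 // => y /negbTE ->; by rewrite mulr0.
Qed.

Lemma zz_sq (psi : vec R n d) (mu : mus) : zz lam psi mu * zz lam psi mu =
  \sum_(x : cfg) \sum_(y : cfg) \sum_(x' : cfg) \sum_(y' : cfg)
    (psi x * (psi y)^* * ((psi x')^* * psi y')) * (tens_op lam mu y x * tens_op lam mu x' y').
Proof.
rewrite {1}/zz mulr_suml; apply: eq_bigr => x _; rewrite mulr_suml; apply: eq_bigr => y _.
rewrite /zz exchange_big mulr_sumr; apply: eq_bigr => x' _; rewrite mulr_sumr.
apply: eq_bigr => y' _; ring.
Qed.

Lemma Qid (S : {set 'I_n}) (psi : vec R n d) :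
  \sum_(mu : mus | supp mu \subset S) ((complex.Re (zz lam psi mu)) ^+ 2)%:C%C
  = (d ^ #|S|)%:R * Pur psi S.
Proof.
under eq_bigr do rewrite real_sqr ?zz_conj // zz_sq.
rewrite exchange_big; under eq_bigr do rewrite exchange_big.
under eq_bigr do under eq_bigr do rewrite exchange_big.
under eq_bigr do under eq_bigr do under eq_bigr do rewrite exchange_big.
under eq_bigr do under eq_bigr do under eq_bigr do under eq_bigr do
  rewrite -mulr_sumr (sumT hd hlam).
rewrite /Pur mulr_sumr; apply: eq_bigr => x _.
under eq_bigr do rewrite exchange_big.
rewrite exchange_big mulr_sumr; apply: eq_bigr => y' _.
pose G (y x' : cfg) := psi x * (psi y)^* * ((psi x')^* * psi y') * (d ^ #|S|)%:R.
transitivity (\sum_(y : cfg) \sum_(x' : cfg) ((G y x' * (y == mix S y' x)%:R) * (x' == mix S x y')%:R)).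
  apply: eq_bigr => y _; apply: eq_bigr => x' _; rewrite -mulnb natrM /G; ring.
under eq_bigr do rewrite sum_ind.
rewrite sum_ind /G; ring.
Qed.
End Main3.
Section Main4.
Variable R : realType.
Variables n d : nat.
Hypothesis hd : (0 < d)%N.
Variable lam : 'I_(d ^ 2 - 1) -> 'M[R[i]]_d.
Hypothesis hlam : gm_basis lam.
Local Notation cfg := (config n d).
Local Notation mus := {ffun 'I_n -> option 'I_(d ^ 2 - 1)}.

Definition w (psi : vec R n d) (mu : mus) : R := (complex.Re (zz lam psi mu)) ^+ 2.
Definition Qs (psi : vec R n d) (S : {set 'I_n}) : R :=
  \sum_(mu : mus | supp mu \subset S) w psi mu.
Definition PR (psi : vec R n d) (S : {set 'I_n}) : R := complex.Re (Pur psi S).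

Lemma w_ge0 psi mu : 0 <= w psi mu.
Proof. exact: sqr_ge0. Qed.

Lemma Qs_PR psi S : Qs psi S = (d ^ #|S|)%:R * PR psi S.
Proof.
have h := Qid hd hlam S psi.
have h2 : ((Qs psi S)%:C)%C = ((d ^ #|S|)%:R : R[i]) * Pur psi S.
  by rewrite /Qs rmorph_sum -h.
have := congr1 (@complex.Re R) h2; rewrite /= => ->.
rewrite -[((d ^ #|S|)%:R : R[i])](rmorph_nat (@real_complex R)) /PR.
case: (Pur psi S) => a b /=; ring.
Qed.

Lemma mix_compl (S : {set 'I_n}) (u v : cfg) : mix (~: S) u v = mix S v u.
Proof. by apply/ffunP => k; rewrite !ffunE inE; case: (k \in S). Qed.

Lemma PR_compl psi S : PR psi (~: S) = PR psi S.
Proof.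
rewrite /PR /Pur; congr complex.Re; apply: eq_bigr => x _; apply: eq_bigr => y _.
rewrite !mix_compl; ring.
Qed.

Lemma PR_prod psi (S : {set 'I_n}) (phi chi : vec R n d) :
  depends_only_on S phi -> depends_only_on (~: S) chi ->
  (forall x, psi x = phi x * chi x) -> normalized psi -> PR psi S = 1.
Proof.
move=> hphi hchi hpsi hn.
rewrite /PR; suff -> : Pur psi S = 1 by [].
transitivity ((\sum_(x : cfg) psi x * cconj (psi x)) * (\sum_(x : cfg) psi x * cconj (psi x))).
  rewrite /Pur mulr_suml; apply: eq_bigr => x _; rewrite mulr_sumr; apply: eq_bigr => y _.
  have e1 : phi (mix S y x) = phi y.
    by apply: hphi => k hk; rewrite ffunE hk.
  have e2 : chi (mix S y x) = chi x.
    by apply: hchi => k; rewrite inE => hk; rewrite ffunE (negbTE hk).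
  have e3 : phi (mix S x y) = phi x.
    by apply: hphi => k hk; rewrite ffunE hk.
  have e4 : chi (mix S x y) = chi y.
    by apply: hchi => k; rewrite inE => hk; rewrite ffunE (negbTE hk).
  rewrite !hpsi e1 e2 e3 e4 /cconj !rmorphM /=; ring.
by rewrite hn mulr1.
Qed.

Lemma PR_T psi : normalized psi -> PR psi setT = 1.
Proof.
move=> hn; apply: (@PR_prod psi setT psi (fun _ => 1)) => //.
- move=> x y h; congr psi; apply/ffunP => k; exact: h (in_setT k).
- by move=> x; rewrite mulr1.
Qed.

End Main4.
Local Open Scope ring_scope.
Set Implicit Arguments.
Unset Strict Implicit.
Unset Printing Implicit Defensive.

Section Pure.
Variable R : realType.
Variables n d : nat.
Hypothesis hn : (3 <= n)%N.
Hypothesis hd2 : (2 <= d)%N.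
Variable lam : 'I_(d ^ 2 - 1) -> 'M[R[i]]_d.
Hypothesis hlam : gm_basis lam.
Local Notation cfg := (config n d).
Local Notation mus := {ffun 'I_n -> option 'I_(d ^ 2 - 1)}.
Variable psi : vec R n d.
Hypothesis hnorm : normalized psi.

Let hd : (0 < d)%N. Proof. by apply: leq_trans hd2. Qed.

Local Notation W := (w lam psi).
Definition SW (a : mus -> nat) : R := \sum_(mu : mus) (a mu)%:R * W mu.

Lemma SW_le a b : (forall mu, a mu <= b mu)%N -> SW a <= SW b.
Proof.
move=> h; apply: ler_sum => mu _; apply: ler_wpM2r; first exact: w_ge0.
by rewrite ler_nat.
Qed.

Lemma SW_add a b : SW (fun mu => a mu + b mu)%N = SW a + SW b.
Proof. by rewrite /SW -big_split /=; apply: eq_bigr => mu _; rewrite natrD mulrDl. Qed.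

Lemma SW_scale k a : SW (fun mu => k * a mu)%N = k%:R * SW a.
Proof. by rewrite /SW mulr_sumr; apply: eq_bigr => mu _; rewrite natrM mulrA. Qed.

Lemma SW_Qs (S : {set 'I_n}) : SW (fun mu => supp mu \subset S) = Qs lam psi S.
Proof.
rewrite /SW /Qs [RHS]big_mkcond /=; apply: eq_bigr => mu _.
by case: (supp mu \subset S); rewrite ?mul1r ?mul0r.
Qed.

Lemma SW_pred (P : pred mus) : SW (fun mu => P mu) = \sum_(mu | P mu) W mu.
Proof.
rewrite /SW [RHS]big_mkcond /=; apply: eq_bigr => mu _.
by case: (P mu); rewrite ?mul1r ?mul0r.
Qed.

Lemma SW_compl (P : pred mus) : SW (fun mu => ~~ P mu) = SW (fun _ => 1%N) - SW (fun mu => P mu).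
Proof.
apply/eqP; rewrite eq_sym subr_eq -SW_add; apply/eqP.
by rewrite /SW; apply: eq_bigr => mu _; case: (P mu).
Qed.

Lemma Qs_val (S : {set 'I_n}) : Qs lam psi S = (d ^ #|S|)%:R * PR psi S.
Proof. exact: (Qs_PR hd hlam). Qed.

Lemma tot : SW (fun _ => 1%N) = (d ^ n)%:R.
Proof.
have -> : SW (fun _ => 1%N) = SW (fun mu => supp mu \subset setT).
  by rewrite /SW; apply: eq_bigr => mu _; rewrite subsetT.
by rewrite SW_Qs Qs_val PR_T // mulr1 cardsT card_ord.
Qed.

Lemma Q0 : Qs lam psi set0 = 1.
Proof.
by rewrite Qs_val cards0 -setCT PR_compl PR_T // mulr1.
Qed.

Definition bigm (mu : mus) := (n.-1 <= #|supp mu|)%N.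

Lemma Cbig_eq : \sum_(mu | bigm mu) W mu = (d ^ n)%:R - SW (fun mu => ~~ bigm mu).
Proof. by rewrite SW_compl tot SW_pred opprB addrC subrK. Qed.

Lemma PR1_Qs (S : {set 'I_n}) : PR psi S = 1 -> Qs lam psi S = (d ^ #|S|)%:R.
Proof. by move=> h; rewrite Qs_val h mulr1. Qed.

Lemma case_i (beta : {set 'I_n}) : PR psi beta = 1 ->
  (2 <= #|beta|)%N -> (2 <= #|~: beta|)%N ->
  \sum_(mu | bigm mu) W mu <= (d ^ n)%:R - (d ^ #|beta|)%:R - (d ^ #|~: beta|)%:R + 1.
Proof.
move=> hP h1 h2.
have hP' : PR psi (~: beta) = 1 by rewrite PR_compl.
have hc := cardsC beta; rewrite card_ord in hc.
have key : SW (fun mu => supp mu \subset beta) + SW (fun mu => supp mu \subset ~: beta)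
   <= SW (fun mu => ~~ bigm mu) + SW (fun mu => supp mu \subset set0).
  rewrite -!SW_add; apply: SW_le => mu; rewrite /bigm.
  case: (boolP (supp mu \subset beta)) => ha; case: (boolP (supp mu \subset ~: beta)) => hb /=.
  - have e : supp mu == set0 by rewrite (eq0_subset beta) ha hb.
    by rewrite (eqP e) sub0set cards0 /=; case: n hn => [|[|m]].
  - have := subset_leq_card ha => hle.
    rewrite -ltnNge (_ : (#|supp mu| < n.-1)%N) //; lia.
  - have := subset_leq_card hb => hle.
    rewrite -ltnNge (_ : (#|supp mu| < n.-1)%N) //; lia.
  - by [].
move: key; rewrite !SW_Qs Q0 !PR1_Qs // Cbig_eq => key.
lra.
Qed.

Section CaseII.
Variable g : {set 'I_n}.
Hypothesis hg1 : #|g| = 1%N.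
Hypothesis hPg : PR psi g = 1.
Local Notation g' := (~: g).

Definition cnt (mu : mus) : nat := \sum_(i in g') (supp mu \subset g' :\ i).

Lemma cnt_le mu : (cnt mu <= #|g' :\: supp mu|)%N.
Proof.
rewrite /cnt -sum1_card [X in (_ <= X)%N]big_mkcond [X in (X <= _)%N]big_mkcond /=.
apply: leq_sum => i _.
case: (boolP (i \in g')) => hi //=.
case: (boolP (supp mu \subset g' :\ i)) => hs //=.
rewrite inE hi andbT.
case: (boolP (i \in supp mu)) => his //=.
have := subsetP hs i his; by rewrite !inE eqxx.
Qed.

Lemma cnt0 mu : ~~ (supp mu \subset g') -> cnt mu = 0%N.
Proof.
move=> h; rewrite /cnt big1 // => i _.
case: (boolP (supp mu \subset g' :\ i)) => // hs; case/negP: h.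
apply: subset_trans hs _; exact: subsetDl.
Qed.

Lemma pointwise mu :
  (cnt mu + (n - 2) * (supp mu \subset g) <=
   (n - 2) * (~~ bigm mu) + (n - 1) * (supp mu \subset set0))%N.
Proof.
have hc := cardsC g; rewrite card_ord hg1 in hc.
have hle := cnt_le mu.
rewrite /bigm.
set s := supp mu in hle *.
case: (boolP (s \subset set0)) => h0.
  have e : s = set0 by apply/eqP; rewrite -subset0.
  move: hle; rewrite e sub0set cards0 setD0 /=.
  rewrite (_ : (n.-1 <= 0)%N = false) /=; last by apply/negbTE; rewrite -ltnNge; lia.
  move=> hle; move: hle hc; set k := #|g'|; set c := cnt mu; lia.
case: (boolP (s \subset g)) => hsg.
  have hns : ~~ (s \subset g').
    apply: contra h0 => hs'; by rewrite subset0 (eq0_subset g) hsg hs'.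
  rewrite cnt0 //.
  have hs1 : (#|s| <= 1)%N by rewrite -hg1 subset_leq_card.
  rewrite -ltnNge (_ : (#|s| < n.-1)%N) /=; first lia.
  apply: leq_ltn_trans hs1 _; lia.
case: (boolP (s \subset g')) => hsg'; last by rewrite cnt0 // muln0.
have hs1 : (0 < #|s|)%N by rewrite lt0n cards_eq0 -subset0.
move: hle; rewrite cardsD (setIidPr hsg') => hle.
case: (boolP (n.-1 <= #|s|)%N) => hb /=; lia.
Qed.

Lemma SW_cnt : SW cnt = \sum_(i in g') Qs lam psi (g' :\ i).
Proof.
rewrite /SW.
under eq_bigr do rewrite /cnt natr_sum mulr_suml.
rewrite exchange_big /=; apply: eq_bigr => i _; rewrite -SW_Qs /SW //.
Qed.

Lemma Qs_part i : i \in g' -> (d ^ (n - 3))%:R <= Qs lam psi (g' :\ i).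
Proof.
move=> hi.
have hc := cardsC g; rewrite card_ord hg1 in hc.
have hc1 : #|g' :\ i| = (n - 2)%N.
  have := cardsD1 i g'; rewrite hi; lia.
set G := ~: (g' :\ i).
have hcG : #|G| = 2%N.
  have := cardsC (g' :\ i); rewrite card_ord hc1 -/G; lia.
have hsub : g \subset G.
  apply/subsetP => k hk; rewrite !inE hk /=; by rewrite andbF.
have hmono : Qs lam psi g <= Qs lam psi G.
  rewrite -!SW_Qs; apply: SW_le => mu.
  case: (boolP (supp mu \subset g)) => h //=.
  by rewrite (subset_trans h hsub).
move: hmono; rewrite PR1_Qs // hg1 Qs_val hcG Qs_val hc1 /G PR_compl.
set P := PR psi _ => hP.
have hdR : (1 : R) <= d%:R by rewrite ler1n; apply: leq_trans hd2.
have -> : (n - 2 = (n - 3).+1)%N by lia.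
rewrite !natrX exprS.
have hD : (1 : R) <= (d%:R) ^+ (n - 3) by apply: exprn_ege1.
have hdP : d%:R * 1 <= (d%:R : R) ^+ 2 * P by rewrite mulr1 -natrX.
have hP1 : 1 <= d%:R * P.
  have h0 : (0 : R) < d%:R by rewrite ltr0n.
  by move: hdP; rewrite expr2 -mulrA ler_pM2l.
nra.
Qed.

Lemma case_ii :
  (n - 2)%:R * ((d ^ n)%:R - \sum_(mu | bigm mu) W mu) + (n - 1)%:R
  >= (n - 1)%:R * (d ^ (n - 3))%:R + (n - 2)%:R * d%:R.
Proof.
have hc := cardsC g; rewrite card_ord hg1 in hc.
have key : SW cnt + SW (fun mu => (n - 2) * (supp mu \subset g))%N
   <= SW (fun mu => (n - 2) * (~~ bigm mu))%N + SW (fun mu => (n - 1) * (supp mu \subset set0))%N.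
  rewrite -!SW_add; apply: SW_le => mu; exact: pointwise.
move: key; rewrite !SW_scale !SW_Qs Q0 PR1_Qs // hg1 expn1 SW_cnt Cbig_eq => key.
have hsum : (n - 1)%:R * (d ^ (n - 3))%:R <= \sum_(i in g') Qs lam psi (g' :\ i).
  have -> : (n - 1)%:R * (d ^ (n - 3))%:R = \sum_(i in g') ((d ^ (n - 3))%:R : R).
    have hg' : #|g'| = (n - 1)%N by move: hc; set k := #|g'|; lia.
    by rewrite sumr_const hg' mulr_natl.
  by apply: ler_sum => i hi; apply: Qs_part.
lra.
Qed.

End CaseII.

Definition Mbnd : R := Num.max
      ((d%:R : R) ^+ n - 2 * Num.sqrt ((d%:R : R) ^+ n) + 1)
      (((d%:R : R) - 1) * ((d%:R : R) ^+ n.-1 - 1) + (d%:R : R) ^+ n.-1 - 1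
        - (n%:R : R) / ((n%:R : R) - 1) * ((d%:R : R) ^+ (n - 3) - 1)).

Lemma boundB (g : {set 'I_n}) : #|g| = 1%N -> PR psi g = 1 ->
  \sum_(mu | bigm mu) W mu <= Mbnd.
Proof.
move=> h1 h2; have H := case_ii h1 h2.
rewrite /Mbnd le_max; apply/orP; right.
set C := \sum_(mu | bigm mu) W mu in H *.
set N : R := n%:R.
set dd : R := d%:R.
set X : R := dd ^+ n.-1.
set D : R := dd ^+ (n - 3).
have hN : 3 <= N by rewrite /N ler_nat.
have hdd : 2 <= dd by rewrite /dd ler_nat.
have hD : 1 <= D by apply: exprn_ege1; lra.
have e1 : ((d ^ n)%:R : R) = dd * X by rewrite natrX /X /dd -exprS prednK //; lia.
have e2 : ((n - 2)%:R : R) = N - 2 by rewrite natrB //; lia.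
have e3 : ((n - 1)%:R : R) = N - 1 by rewrite natrB //; lia.
have e4 : ((d ^ (n - 3))%:R : R) = D by rewrite natrX.
rewrite e1 e2 e3 e4 -/dd in H.
set t := N / (N - 1) * (D - 1).
have ht : t * (N - 1) = N * (D - 1).
  have hN1 : (0 : R) < N - 1 by lra.
  by rewrite /t mulrAC divfK // lt0r_neq0.
have e : (N - 2) * t * (N - 1) = (N - 2) * N * (D - 1) by rewrite -mulrA ht mulrA.
have H2 : (N - 2) * t <= (N - 1) * (D - 1).
  rewrite -(@ler_pM2r _ (N - 1)); last by lra.
  rewrite e; nra.
have H3 : 0 <= (N - 2) * (dd * X - dd - t - C) by nra.
have H4 : 0 <= dd * X - dd - t - C.
  by move: H3; rewrite pmulr_rge0 //; lra.
have -> : (dd - 1) * (X - 1) + X - 1 - t = dd * X - dd - t by ring.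
lra.
Qed.

Lemma boundA (beta : {set 'I_n}) : PR psi beta = 1 ->
  (2 <= #|beta|)%N -> (2 <= #|~: beta|)%N ->
  \sum_(mu | bigm mu) W mu <= Mbnd.
Proof.
move=> hP h1 h2; have H := case_i hP h1 h2.
rewrite /Mbnd le_max; apply/orP; left.
have hc := cardsC beta; rewrite card_ord in hc.
set u : R := (d ^ #|beta|)%:R in H.
set v : R := (d ^ #|~: beta|)%:R in H.
have huv : (d%:R : R) ^+ n = u * v by rewrite /u /v -natrM -expnD hc natrX.
have hu : 0 <= u by rewrite /u ler0n.
have hv : 0 <= v by rewrite /v ler0n.
rewrite huv sqrtrM //.
have e1 : (d ^ n)%:R = u * v :> R by rewrite natrX huv.
rewrite e1 in H.
have := sqr_sqrtr hu; have := sqr_sqrtr hv.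
have := sqrtr_ge0 u; have := sqrtr_ge0 v.
set a := Num.sqrt u; set b := Num.sqrt v => ha hb hb2 ha2.
rewrite -ha2 -hb2 in H *.
have hab : 2 * (a * b) <= a ^+ 2 + b ^+ 2.
  rewrite -subr_ge0 (_ : a ^+ 2 + b ^+ 2 - 2 * (a * b) = (a - b) ^+ 2); first exact: sqr_ge0.
  ring.
lra.
Qed.

Lemma pure_bound : biproduct psi -> \sum_(mu | bigm mu) W mu <= Mbnd.
Proof.
move=> [beta [hb0 hbT [phi [chi [hphi hchi hpsi]]]]].
have hP : PR psi beta = 1 by apply: (PR_prod hphi hchi hpsi hnorm).
have hP' : PR psi (~: beta) = 1 by rewrite PR_compl.
have hc := cardsC beta; rewrite card_ord in hc.
have h1 : (0 < #|beta|)%N by rewrite card_gt0.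
have h2 : (0 < #|~: beta|)%N.
  rewrite card_gt0; apply: contra hbT => /eqP h.
  by rewrite -(setCK beta) h setC0.
case: (boolP (#|beta| == 1%N)) => e1; first by apply: (boundB (eqP e1) hP).
case: (boolP (#|~: beta| == 1%N)) => e2; first by apply: (boundB (eqP e2) hP').
apply: (boundA hP); lia.
Qed.

End Pure.
Local Open Scope ring_scope.

Lemma jensen (R : realType) m (p c : 'I_m -> R) : (forall k, 0 <= p k) -> \sum_k p k = 1 ->
  (\sum_k p k * c k) ^+ 2 <= \sum_k p k * c k ^+ 2.
Proof.
move=> hp h1; set M := \sum_k p k * c k.
have H : 0 <= \sum_k p k * (c k - M) ^+ 2.
  by apply: sumr_ge0 => k _; apply: mulr_ge0 => //; apply: sqr_ge0.
have E : \sum_k p k * (c k - M) ^+ 2 =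
   \sum_k p k * c k ^+ 2 - (2 * M) * M + M ^+ 2 * \sum_k p k.
  transitivity (\sum_k (p k * c k ^+ 2 - (2 * M) * (p k * c k) + M ^+ 2 * p k)).
    by apply: eq_bigr => k _; ring.
  by rewrite big_split /= sumrB -!mulr_sumr.
rewrite E h1 in H; lra.
Qed.

Lemma Re_sum (R : realType) (I : finType) (F : I -> R[i]) :
  complex.Re (\sum_i F i) = \sum_i complex.Re (F i).
Proof. by apply: (big_morph (@complex.Re R)) => // [[a b] [c e]]. Qed.

Unset Implicit Arguments.
Set Strict Implicit.
Theorem corollary2 (R : realType) (n d : nat) (hn : (3 <= n)%N) (hd : (2 <= d)%N)
    (lam : 'I_(d ^ 2 - 1) -> 'M[R[i]]_d) (hlam : gm_basis lam)
    (rho : op R n d) (hrho : biseparable rho) :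
  C_nm1 lam rho <=
    Num.max
      ((d%:R : R) ^+ n - 2 * Num.sqrt ((d%:R : R) ^+ n) + 1)
      (((d%:R : R) - 1) * ((d%:R : R) ^+ n.-1 - 1) + (d%:R : R) ^+ n.-1 - 1
        - (n%:R : R) / ((n%:R : R) - 1) * ((d%:R : R) ^+ (n - 3) - 1)).
Proof.
case: hrho => m [p [psi [hp0 hp1 hpsi hrho]]].
have hC : C_nm1 lam rho = \sum_(mu | bigm mu) (corr lam rho mu) ^+ 2.
  rewrite /C_nm1 /tau_norm2 (partition_big (@supp n d) (fun A : {set 'I_n} => n.-1 <= #|A|)%N) //=.
  apply: eq_bigr => A hA; apply: eq_bigl => mu; rewrite /bigm.
  by case: (boolP (supp mu == A)) => /= [/eqP ->|]; rewrite ?hA ?andbF.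
have hcorr mu : corr lam rho mu = \sum_k p k * complex.Re (zz lam (psi k) mu).
  rewrite /corr.
  have -> : \sum_(x : config n d) \sum_(y : config n d) rho x y * tens_op lam mu y x
          = \sum_k ((p k)%:C)%C * zz lam (psi k) mu.
    under eq_bigr do under eq_bigr do rewrite hrho mulr_suml.
    under eq_bigr do rewrite exchange_big.
    rewrite exchange_big; apply: eq_bigr => k _; rewrite /zz mulr_sumr.
    apply: eq_bigr => x _; rewrite mulr_sumr; apply: eq_bigr => y _; rewrite /cconj; ring.
  rewrite Re_sum; apply: eq_bigr => k _.
  by case: (zz lam (psi k) mu) => a b /=; ring.
rewrite hC.
apply: le_trans (_ : \sum_(mu | bigm mu) \sum_k p k * w lam (psi k) mu <= _).
  apply: ler_sum => mu _; rewrite hcorr; exact: jensen.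
rewrite exchange_big /=.
apply: le_trans (_ : \sum_k p k * Mbnd R n d <= _).
  apply: ler_sum => k _; rewrite -mulr_sumr; apply: ler_wpM2l => //.
  case: (hpsi k) => hk1 hk2; exact: (pure_bound hn hd hlam hk1 hk2).
by rewrite -mulr_suml hp1 mul1r.
Qed.
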